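(* Let $(\mathcal V,\{C_n\}_n,e)$ be an operator system and let $p\in\mathcal V$ be a nonzero positive contraction ($0\le p\le e$). Then $\alpha_m(p)=1$ if and only if $p\notin J_p$.
   Context: $\alpha_m(x)=\sup\{|\varphi(x)|:\varphi\text{ a state on }\mathcal V\}$ is the minimal order norm. $C(p)=\{x\in\mathcal V: x=x^*,\ \forall\epsilon>0\ \exists t>0\text{ such that } x+\epsilon p+t(e-p)\in C_1\}$ and $J_p=\operatorname{span}(C(p)\cap-C(p))$. *)

(* Defs.v *)
From HB Require Import structures.
From mathcomp Require Import all_boot all_order all_algebra.
From mathcomp Require Import complex.
From mathcomp Require Import classical_sets reals.
Set Implicit Arguments. Unset Strict Implicit. Unset Printing Implicit Defensive.
Import Order.TTheory GRing.Theory Num.Theory.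
Local Open Scope ring_scope.
Local Open Scope classical_set_scope.

Section OpSys.
Variable R : realType.
Local Notation C := R[i].
Variable V : lmodType C.

Definition mx_star (star : V -> V) n (A : 'M[V]_n) : 'M[V]_n :=
  \matrix_(i, j) star (A j i).

(* X^* A X for a scalar matrix X : M_{n,m}(C) and A : M_n(V) *)
Definition mx_congr n m (X : 'M[C]_(n, m)) (A : 'M[V]_n) : 'M[V]_m :=
  \matrix_(i, j) \sum_(k < n) \sum_(l < n) ((X k i)^* * X l j) *: A k l.

Definition mx_unit (e : V) n : 'M[V]_n := \matrix_(i, j) (if i == j then e else 0).

Unset Implicit Arguments.
Record opsys := OpSys {
  star : V -> V;
  cones : forall n, set 'M[V]_n;
  unit_e : V;
  star_invol : forall x, star (star x) = x;
  star_semilinear : forall (a : C) x y, star (a *: x + y) = a^* *: star x + star y;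
  cones_herm : forall n A, cones n A -> mx_star star A = A;
  cones_add : forall n A B, cones n A -> cones n B -> cones n (A + B);
  cones_scale : forall n (t : C) A, 0 <= t -> cones n A -> cones n (map_mx (fun v => t *: v) A);
  cones_proper : forall n A, cones n A -> cones n (- A) -> A = 0;
  cones_compat : forall n m (X : 'M[C]_(n, m)) A, cones n A -> cones m (mx_congr X A);
  unit_herm : star unit_e = unit_e;
  unit_order : forall n (A : 'M[V]_n), mx_star star A = A ->
     exists r : C, 0 < r /\ cones n (mx_unit (r *: unit_e) n + A);
  unit_archimedean : forall n (A : 'M[V]_n), mx_star star A = A ->
     (forall r : C, 0 < r -> cones n (mx_unit (r *: unit_e) n + A)) -> cones n A
}.
Set Implicit Arguments.
Arguments cones o n _ : clear implicits.

Variable S : opsys.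

Definition pos (x : V) : Prop := cones S 1 (const_mx x).

Definition state (phi : V -> C) : Prop :=
  (forall (a : C) x y, phi (a *: x + y) = a * phi x + phi y) /\
  (forall x, pos x -> 0 <= phi x) /\
  phi (unit_e S) = 1.

Definition alpha_m (x : V) : R := sup [set complex.Re `|phi x| | phi in state].

Definition Cp (p : V) : set V :=
  [set x | star S x = x /\
     forall eps : C, 0 < eps -> exists t : C, 0 < t /\
        pos (x + eps *: p + t *: (unit_e S - p))].

Definition span (A : set V) : set V :=
  [set x | exists n (a : 'I_n -> C) (v : 'I_n -> V),
     (forall i, A (v i)) /\ x = \sum_(i < n) a i *: v i].

Definition Jp (p : V) : set V := span (Cp p `&` [set x | Cp p (- x)]).

End OpSys.

Arguments star {R V} o _.
Arguments unit_e {R V} o.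
Arguments pos {R V} S x.
Arguments state {R V} S phi.
Arguments alpha_m {R V} S x.
Arguments Cp {R V} S p _.
Arguments span {R V} A _.
Arguments Jp {R V} S p _.

(* Main.v *)
Require Import Defs.
From HB Require Import structures.
From mathcomp Require Import all_boot all_order all_algebra.
From mathcomp Require Import complex.
From mathcomp Require Import classical_sets reals boolp.
From mathcomp Require Import ring lra.
Import Order.TTheory GRing.Theory Num.Theory.
Local Open Scope ring_scope.
Local Open Scope classical_set_scope.
Local Open Scope complex_scope.
Local Open Scope ring_scope.

Section Basics.
Variables (R : realType) (V : lmodType R[i]) (S : opsys R V).
Local Notation C := R[i].
Local Notation e := (unit_e S).
Local Notation st := (star S).

Lemma star_add x y : st (x + y) = st x + st y.
Proof. by have := @star_semilinear _ _ S 1 x y; rewrite !scale1r conjC1 scale1r. Qed.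

Lemma star0 : st 0 = 0.
Proof. have h := star_add 0 0; rewrite addr0 in h. by apply: (addrI (st 0)); rewrite addr0 -h. Qed.

Lemma star_scale (a : C) x : st (a *: x) = a^* *: st x.
Proof. by have := @star_semilinear _ _ S a x 0; rewrite !addr0 star0 addr0. Qed.

Lemma star_opp x : st (- x) = - st x.
Proof. by rewrite -scaleN1r star_scale rmorphN1 scaleN1r. Qed.

Lemma conj_real (t : R) : (t%:C)^* = t%:C :> C.
Proof. apply: conj_Creal; apply/complex_realP; by exists t. Qed.

Lemma star_rscale (t : R) x : st (t%:C *: x) = t%:C *: st x.
Proof. by rewrite star_scale conj_real. Qed.

Lemma constD n m (x y : V) : const_mx (x + y) = const_mx x + const_mx y :> 'M[V]_(n,m).
Proof. by apply/matrixP => i j; rewrite !mxE. Qed.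

Lemma pos_add x y : pos S x -> pos S y -> pos S (x + y).
Proof. by rewrite /pos constD; apply: (@cones_add _ _ S 1). Qed.

Lemma pos_scale (t : C) x : 0 <= t -> pos S x -> pos S (t *: x).
Proof.
move=> t0 /(@cones_scale _ _ S 1 t _ t0); congr (cones _ _ _).
by apply/matrixP => i j; rewrite !mxE.
Qed.

Lemma pos_herm x : pos S x -> st x = x.
Proof.
move=> /(@cones_herm _ _ S 1) /matrixP /(_ ord0 ord0); rewrite !mxE //.
Qed.

Lemma pos_proper x : pos S x -> pos S (- x) -> x = 0.
Proof.
move=> h1 h2.
have h2' : cones _ _ S 1 (- const_mx x).
  by move: h2; rewrite /pos; congr (cones _ _ _); apply/matrixP => i j; rewrite !mxE.
have := @cones_proper _ _ S 1 _ h1 h2' => /matrixP /(_ ord0 ord0); rewrite !mxE //.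
Qed.

Lemma mx_unit1 (v : V) : mx_unit v 1 = const_mx v.
Proof. by apply/matrixP => i j; rewrite !mxE !ord1 eqxx. Qed.

Lemma herm_order h : st h = h -> exists r : C, 0 < r /\ pos S (r *: e + h).
Proof.
move=> hh.
have hA : mx_star st (const_mx h : 'M[V]_1) = const_mx h.
  by apply/matrixP => i j; rewrite !mxE hh.
have [r [r0 hr]] := @unit_order _ _ S 1 _ hA.
by exists r; split => //; move: hr; rewrite mx_unit1 -constD.
Qed.

Lemma pos0 : pos S 0.
Proof.
have [r [_ hr]] := herm_order 0 star0.
by have := pos_scale 0 _ (lexx 0) hr; rewrite scale0r.
Qed.

Lemma pos_e : pos S e.
Proof.
have [r [r0 hr]] := herm_order 0 star0.
move: hr; rewrite addr0 => hr.
have ri : 0 <= r^-1 by rewrite invr_ge0 ltW.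
have := pos_scale _ _ ri hr.
by rewrite scalerA mulVf ?scale1r // gt_eqF.
Qed.

Lemma pos_se (s : R) : e != 0 -> pos S (s%:C *: e) -> 0 <= s.
Proof.
move=> e0 hs; rewrite leNgt; apply/negP => s0.
have hn : 0 <= (- s^-1)%:C by rewrite ler0c oppr_ge0 ltW // invr_lt0.
have := pos_scale _ _ hn hs; rewrite scalerA -rmorphM mulNr mulVf ?lt_eqF //.
rewrite rmorphN rmorph1 scaleN1r => hne.
by move: e0; rewrite (pos_proper _ pos_e hne) eqxx.
Qed.


Definition qf (r : R) (x : V) : V := (r%:C *: e - x) + (r%:C *: e - st x).
Definition linG (G : set (V * R)) := forall x a y b (t : R),
  G (x, a) -> G (y, b) -> G (t%:C *: x + y, t * a + b).
Definition domG (G : set (V * R)) := forall x a r, G (x, a) -> pos S (qf r x) -> a <= r.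
Definition validG G := G (0, 0) /\ linG G /\ domG G.

Lemma linG' G x a y b (t : R) z c : linG G -> G (x, a) -> G (y, b) ->
  z = t%:C *: x + y -> c = t * a + b -> G (z, c).
Proof. by move=> hl hx hy -> ->; apply: hl. Qed.

Lemma qfD r r' x y : qf (r + r') (x + y) = qf r x + qf r' y.
Proof.
rewrite /qf star_add rmorphD !scalerDl.
set a := r%:C *: e; set b := r'%:C *: e.
rewrite !opprD [a + b + (- x - y)]addrACA [a + b + (- st x - _)]addrACA.
exact: addrACA.
Qed.

Lemma qfZ (t r : R) x : qf (t * r) (t%:C *: x) = t%:C *: qf r x.
Proof.
by rewrite /qf star_rscale rmorphM scalerDr !scalerBr !scalerA.
Qed.

Lemma qf_herm r x : st x = x -> qf r x = (r%:C *: e - x) + (r%:C *: e - x).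
Proof. by rewrite /qf => ->. Qed.

Lemma qf0 : qf 0 0 = 0.
Proof. by rewrite /qf star0 rmorph0 scale0r !subr0 addr0. Qed.

Lemma pos_half y : pos S (y + y) -> pos S y.
Proof.
move=> h.
have h2 : 0 <= (2%:R : C)^-1 by rewrite invr_ge0 ler0n.
have := pos_scale _ _ h2 h; congr (pos S _).
have -> : y + y = (2%:R : C) *: y by rewrite scaler_nat mulr2n.
by rewrite scalerA mulVf ?scale1r // pnatr_eq0.
Qed.


Definition extG (G : set (V * R)) (v : V) (c : R) : set (V * R) :=
  [set xa | exists w a (s : R), G (w, a) /\ xa = (w + s%:C *: v, a + s * c)].

Lemma extG_sub G v c : G `<=` extG G v c.
Proof.
case=> x a h; exists x, a, 0; split=> //.
by rewrite rmorph0 scale0r addr0 mul0r addr0.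
Qed.

Lemma extG_v G v c : G (0, 0) -> extG G v c (v, c).
Proof.
move=> h; exists 0, 0, 1; split=> //.
by rewrite rmorph1 scale1r add0r mul1r add0r.
Qed.

Lemma extG_valid G v c : validG G ->
  (forall w a r, G (w, a) -> pos S (qf r (w + v)) -> a + c <= r) ->
  (forall w a r, G (w, a) -> pos S (qf r (w - v)) -> a - c <= r) ->
  validG (extG G v c).
Proof.
move=> [G0 [Gl Gd]] hA hB; split; first exact: extG_sub.
split.
  move=> x a y b t [w1 [a1 [s1 [h1 [-> ->]]]]] [w2 [a2 [s2 [h2 [-> ->]]]]].
  exists (t%:C *: w1 + w2), (t * a1 + a2), (t * s1 + s2); split; first exact: Gl.
  congr pair; last by ring.
  rewrite rmorphD rmorphM scalerDl -scalerA !scalerDr.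
  by rewrite -!addrA; congr (_ + _); rewrite addrCA.
move=> x a r [w [a1 [s [hw [-> ->]]]]] hq.
case: (ltgtP s 0) => hs.
- pose u := (- s)^-1.
  have hu : 0 < u by rewrite /u invr_gt0 oppr_gt0.
  have hw' : G (u%:C *: w, u * a1).
    by have := Gl _ _ _ _ u hw G0; rewrite !addr0.
  have hu' : 0 <= u%:C by rewrite ler0c ltW.
  have hq' := pos_scale _ _ hu' hq.
  rewrite -qfZ scalerDr scalerA -rmorphM in hq'.
  have us : u * s = -1 by rewrite /u invrN mulNr mulVf ?lt_eqF.
  rewrite us rmorphN1 scaleN1r in hq'.
  have := hB _ _ _ hw' hq'.
  have e1 : a1 + s * c = - s * (u * a1 - c) by rewrite /u; field; rewrite lt_eqF.
  have e2 : r = - s * (u * r) by rewrite /u; field; rewrite lt_eqF.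
  move=> h; apply: (@le_trans _ _ (- s * (u * r))); last by rewrite -e2.
  by rewrite e1 ler_pM2l // oppr_gt0.
- pose u := s^-1.
  have hu : 0 < u by rewrite /u invr_gt0.
  have hw' : G (u%:C *: w, u * a1).
    by have := Gl _ _ _ _ u hw G0; rewrite !addr0.
  have hu' : 0 <= u%:C by rewrite ler0c ltW.
  have hq' := pos_scale _ _ hu' hq.
  rewrite -qfZ scalerDr scalerA -rmorphM in hq'.
  have us : u * s = 1 by rewrite /u mulVf ?gt_eqF.
  rewrite us rmorph1 scale1r in hq'.
  have := hA _ _ _ hw' hq'.
  have e1 : a1 + s * c = s * (u * a1 + c) by rewrite /u; field; rewrite gt_eqF.
  have e2 : r = s * (u * r) by rewrite /u; field; rewrite gt_eqF.
  move=> h; apply: (@le_trans _ _ (s * (u * r))); last by rewrite -e2.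
  by rewrite e1 ler_pM2l.
- subst s; move: hq; rewrite rmorph0 scale0r addr0 mul0r addr0.
  exact: Gd hw.
Qed.


Lemma qf_bound v : exists r : R, pos S (qf r v).
Proof.
have hh : st (- (v + st v)) = - (v + st v).
  by rewrite star_opp star_add (@star_invol _ _ S) addrC.
have [r0 [r00 hr]] := herm_order _ hh.
have rr : r0 = (complex.Re r0)%:C by rewrite RRe_real // gtr0_real.
exists (complex.Re r0).
have h1 : pos S (r0 *: e) by apply: pos_scale (ltW r00) pos_e.
have := pos_add _ _ hr h1; congr (pos S _).
by rewrite /qf -rr opprD addrACA addrC [LHS]addrAC [LHS]addrC.
Qed.

Lemma valid_cover U : U (0, 0) ->
  (forall z1 z2, U z1 -> U z2 -> exists X, validG X /\ X `<=` U /\ X z1 /\ X z2) ->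
  validG U.
Proof.
move=> U0 hU; split => //; split.
  move=> x a y b t hx hy.
  have [X [[_ [Xl _]] [XU [X1 X2]]]] := hU _ _ hx hy.
  by apply: XU; apply: Xl.
move=> x a r hx hq.
have [X [[_ [_ Xd]] [XU [X1 X2]]]] := hU _ _ hx hx.
exact: Xd X1 hq.
Qed.

Lemma key_ineq M v w a r w' a' r' : validG M ->
  M (w, a) -> pos S (qf r (w + v)) -> M (w', a') -> pos S (qf r' (w' - v)) ->
  a' - r' <= r - a.
Proof.
move=> [_ [Ml Md]] h1 q1 h2 q2.
have h := Ml _ _ _ _ 1 h1 h2; rewrite rmorph1 scale1r mul1r in h.
have q : pos S (qf (r + r') (w + w')).
  have := pos_add _ _ q1 q2; rewrite -qfD; congr (pos S (qf _ _)).
  by rewrite addrACA subrr addr0.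
have := Md _ _ _ h q.
move=> hh; lra.
Qed.

Definition Sb (M : set (V * R)) v : set R :=
  [set z | exists w a r, M (w, a) /\ pos S (qf r (w - v)) /\ z = a - r].

Lemma step M v : validG M -> validG (extG M v (sup (Sb M v))).
Proof.
move=> hM; have [M0 _] := hM.
have [r1 hr1] := qf_bound v.
have [r2 hr2] := qf_bound (- v).
have ne : Sb M v !=set0.
  exists (0 - r2), 0, 0, r2; split => //; split => //; by rewrite add0r.
have ub : ubound (Sb M v) (r1 - 0).
  move=> z [w [a [r [h1 [h2 ->]]]]].
  apply: (@key_ineq M v 0 0 r1 w a r hM M0 _ h1 h2); by rewrite add0r.
apply: extG_valid => //.
- move=> w a r h1 h2.
  rewrite addrC -lerBrDr.
  apply: ge_sup => //.
  move=> z [w1 [a1 [r3 [hh1 [hh2 ->]]]]].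
  exact: (key_ineq _ _ _ _ _ _ _ _ hM h1 h2 hh1 hh2).
- move=> w a r h1 h2.
  rewrite lerBlDr -lerBlDl.
  apply: ub_le_sup; first by exists (r1 - 0).
  by exists w, a, r.
Qed.


Lemma maximal_graph G0 : validG G0 ->
  exists M, validG M /\ G0 `<=` M /\ forall v, exists a, M (v, a).
Proof.
move=> hG0.
pose P := [set H : set (V * R) | validG (G0 `|` H)].
have [H [PH Hmax]] : exists H, P H /\ forall B, H `<` B -> ~ P B.
  apply: Zorn_bigcup => F FP Ftot.
  rewrite /P /=.
  set U := G0 `|` _.
  have hz : forall z, U z -> exists Hz, (Hz = set0 \/ F Hz) /\ (G0 `|` Hz) z.
    move=> z [hz0|[X FX hX0]]; first by exists set0; split; [left|left].
    by exists X; split; [right|right].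
  have hX : forall Hz, (Hz = set0 \/ F Hz) -> validG (G0 `|` Hz) /\ G0 `|` Hz `<=` U.
    move=> Hz [->|FH]; first by rewrite setU0; split=> // z hz1; left.
    split; first exact: FP.
    move=> z [hz1|hz1]; first by left.
    by right; exists Hz.
  apply: valid_cover; first by left; case: hG0.
  move=> z1 z2 /hz [H1 [o1 h1]] /hz [H2 [o2 h2]].
  have [sub12|sub21] : H1 `<=` H2 \/ H2 `<=` H1.
  - case: o1 => [->|F1]; first by left.
    case: o2 => [->|F2]; first by right.
    exact: Ftot.
  - have [v2 s2] := hX _ o2.
    exists (G0 `|` H2); split => //; split => //; split => //.
    by case: h1 => [h|h]; [left|right; apply: sub12].
  - have [v1 s1] := hX _ o1.
    exists (G0 `|` H1); split => //; split => //; split => //.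
    by case: h2 => [h|h]; [left|right; apply: sub21].
exists (G0 `|` H); split => //; split; first by move=> z hz; left.
move=> v; case: (pselect (exists a, (G0 `|` H) (v, a))) => // nv; exfalso.
set c := sup (Sb (G0 `|` H) v).
have hv := step _ v PH.
have sub : G0 `|` H `<=` extG (G0 `|` H) v c by apply: extG_sub.
apply: (Hmax (extG (G0 `|` H) v c)).
- split; first by move=> z hz; apply: sub; right.
  move=> hsub; apply: nv; exists c; right; apply: hsub.
  apply: extG_v; by case: PH.
- rewrite /P /= setUidr //.
  by move=> z hz; apply: sub; left.
Qed.


Lemma funct M x a b : validG M -> M (x, a) -> M (x, b) -> a = b.
Proof.
move=> [M0 [Ml Md]] ha hb.
have key : forall a b, M (x, a) -> M (x, b) -> b <= a.
  move=> a1 b1 h1 h2.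
  have h := Ml _ _ _ _ (-1) h1 h2.
  rewrite rmorphN1 scaleN1r addNr mulN1r in h.
  have := Md _ _ 0 h; rewrite qf0 => /(_ pos0); lra.
by apply/le_anti; rewrite !key.
Qed.

Lemma cplx_id (I al be u v w z : C) : I * I = -1 ->
  (al * u + be * v + w) - I * (al * v - be * u + z) =
  (al + I * be) * (u - I * v) + (w - I * z).
Proof.
move=> h.
have -> : (al + I * be) * (u - I * v) = al * u - I * al * v + I * be * u - (I * I) * be * v by ring.
rewrite h; ring.
Qed.

Lemma state_from_graph M : validG M -> (forall v, exists a, M (v, a)) ->
  M (e, 1) -> exists phi, state S phi /\ forall x a, M (x, a) -> st x = x -> phi x = a%:C.
Proof.
move=> hM tot Me.
have [M0 [Ml Md]] := hM.
pose f v := projT1 (cid (tot v)).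
have Hf : forall v, M (v, f v) by move=> v; rewrite /f; case: (cid _).
have fE : forall x a, M (x, a) -> f x = a by move=> x a h; exact: (funct _ _ _ _ hM (Hf x) h).
have flin : forall (t : R) x y, f (t%:C *: x + y) = t * f x + f y.
  by move=> t x y; apply: fE; apply: Ml.
have fN : forall x, f (- x) = - f x.
  move=> x; have := flin (-1) x 0; rewrite rmorphN1 scaleN1r addr0 (fE _ _ M0).
  by rewrite addr0 mulN1r.
have fi : forall x, st x = x -> f ('i *: x) = 0.
  move=> x hx.
  have q0 : forall y, y = 'i *: x \/ y = - ('i *: x) -> f y <= 0.
    move=> y hy; apply: (Md _ _ 0 (Hf y)).
    have -> : qf 0 y = 0.
      rewrite /qf rmorph0 scale0r !sub0r.
      case: hy => ->; rewrite ?star_opp star_scale conjCi hx scaleNr;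
      by rewrite ?opprK ?addrN ?addNr.
    exact: pos0.
  have h1 := q0 _ (or_introl erefl); have h2 := q0 _ (or_intror erefl).
  rewrite fN in h2; lra.
have fpos : forall x, pos S x -> 0 <= f x.
  move=> x hx.
  have := Md _ _ 0 (Hf (- x)).
  rewrite qf_herm; last by rewrite star_opp (pos_herm _ hx).
  rewrite rmorph0 scale0r sub0r opprK fN => /(_ (pos_add _ _ hx hx)); lra.
pose phi x := (f x)%:C - 'i * (f ('i *: x))%:C.
have phiE : forall x a, M (x, a) -> st x = x -> phi x = a%:C.
  by move=> x a h hx; rewrite /phi fi // (fE _ _ h) rmorph0 mulr0 subr0.
exists phi; split => //; split; last split.
- move=> a x y.
  rewrite {1 2}[a]complexE complexiE.
  set al := complex.Re a; set be := complex.Im a.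
  have e1 : (al%:C + 'i * be%:C) *: x + y = al%:C *: x + (be%:C *: ('i *: x) + y).
    by rewrite scalerDl -addrA scalerA; congr (_ + (_ *: _ + _)); exact: mulrC.
  have e2 : 'i *: ((al%:C + 'i * be%:C) *: x + y) =
            al%:C *: ('i *: x) + ((- be)%:C *: x + 'i *: y).
    rewrite scalerDl !scalerDr -addrA !scalerA; congr (_ *: _ + (_ *: _ + _)).
    - by rewrite mulrC.
    - by rewrite mulrA mulCii rmorphN mulN1r.
  rewrite /phi e2 e1 !flin.
  rewrite -(cplx_id _ _ _ _ _ _ _ (@mulCii _)) !rmorphD !rmorphM rmorphN.
  ring.
- move=> x hx; rewrite /phi fi ?(pos_herm _ hx) // rmorph0 mulr0 subr0 ler0c.
  exact: fpos.
- by apply: phiE => //; exact: unit_herm.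
Qed.


Definition G00 : set (V * R) := [set xa | exists t : R, xa = (t%:C *: e, t)].

Lemma st_te (t : R) : st (t%:C *: e) = t%:C *: e.
Proof. by rewrite star_rscale unit_herm. Qed.

Lemma qf_te r (t : R) x : st x = x ->
  qf r (t%:C *: e + x) = ((r - t)%:C *: e - x) + ((r - t)%:C *: e - x).
Proof.
move=> hx; rewrite qf_herm; last by rewrite star_add st_te hx.
by rewrite rmorphB scalerBl; congr (_ + _); rewrite opprD addrA.
Qed.

Lemma G00_valid : e != 0 -> validG G00.
Proof.
move=> e0; split; first by exists 0; rewrite rmorph0 scale0r.
split.
  move=> x a y b t [t1 [-> ->]] [t2 [-> ->]].
  by exists (t * t1 + t2); rewrite rmorphD rmorphM scalerDl scalerA.
move=> x a r [t [-> ->]].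
rewrite -[t%:C *: e]addr0 qf_te ?star0 // subr0 => /pos_half /(pos_se _ e0).
rewrite subr_ge0 //.
Qed.

Lemma state_for_p p : e != 0 -> pos S p -> pos S (e - p) ->
  (forall r : R, r < 1 -> ~ pos S (r%:C *: e - p)) ->
  exists phi, state S phi /\ phi p = 1.
Proof.
move=> e0 pp pep hr.
have hp : st p = p := pos_herm _ pp.
have v00 := G00_valid e0.
have v0 : validG (extG G00 p 1).
  apply: extG_valid => //.
  - move=> w a r [t [-> ->]] /=.
    rewrite qf_te // => /pos_half hq.
    rewrite -lerBrDl; rewrite leNgt; apply/negP => hlt.
    apply: (hr (r - t)) => //; lra.
  - move=> w a r [t [-> ->]] /=.
    rewrite qf_te; last by rewrite star_opp hp.
    rewrite opprK => /pos_half hq.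
    have := pos_add _ _ hq pep.
    rewrite addrACA subrr addr0.
    rewrite -[X in _ + X]scale1r -scalerDl -[1 : C](rmorph1 (real_complex R)) -rmorphD => /(pos_se _ e0).
    lra.
have [M [vM [sub tot]]] := maximal_graph _ v0.
have Me : M (e, 1).
  apply: sub; apply: extG_sub; exists 1; by rewrite rmorph1 scale1r.
have [phi [sphi hphi]] := state_from_graph _ vM tot Me.
exists phi; split => //.
rewrite (hphi p 1) ?rmorph1 //.
apply: sub; apply: extG_v; by case: v00.
Qed.


Lemma norm_bound (z K K' : C) : 0 <= z + K -> 0 <= - z + K' -> 0 <= K -> 0 <= K' ->
  `|z| <= K + K'.
Proof.
move=> h1 h2 hK hK'.
have zr : z \is Num.real.
  have -> : z = (z + K) - K by rewrite addrK.
  by rewrite rpredB // ger0_real.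
have h1' : - K <= z by rewrite -subr_ge0 opprK.
have h2' : z <= K' by rewrite -subr_ge0 addrC.
rewrite real_ler_norml //; apply/andP; split.
  by apply: le_trans h1'; rewrite lerN2 lerDl.
by apply: le_trans h2' _; rewrite lerDr.
Qed.

Lemma state_lin phi : state S phi ->
  [/\ phi 0 = 0, forall x y, phi (x + y) = phi x + phi y,
      forall a x, phi (a *: x) = a * phi x & forall x, phi (- x) = - phi x].
Proof.
move=> [hl _].
have p0 : phi 0 = 0.
  have := hl 1 0 0; rewrite scale1r addr0 mul1r => h.
  by apply: (addrI (phi 0)); rewrite addr0 -h.
have pZ : forall a x, phi (a *: x) = a * phi x.
  by move=> a x; have := hl a x 0; rewrite addr0 p0 addr0.
split => //.
- by move=> x y; have := hl 1 x y; rewrite scale1r mul1r.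
- by move=> x; rewrite -scaleN1r pZ mulN1r.
Qed.

Lemma state_p phi p : state S phi -> pos S p -> pos S (e - p) ->
  0 <= phi p /\ phi p <= 1.
Proof.
move=> sp pp pep.
have [_ pD _ pN] := state_lin _ sp.
have [_ [hp he]] := sp.
split; first exact: hp.
have := hp _ pep; rewrite pD pN he subr_ge0 //.
Qed.

Lemma Jp_of_le (r : R) p : r < 1 -> pos S p -> pos S (e - p) ->
  pos S (r%:C *: e - p) -> Jp S p p.
Proof.
move=> r1 pp pep prp.
have hp : st p = p := pos_herm _ pp.
have Cpp : Cp S p p.
  split => // eps eps0; exists 1; split => //.
  have := pos_add _ _ (pos_scale _ _ (ltW eps0) pp) pos_e.
  congr (pos S _).
  by rewrite scale1r [RHS]addrC addrA subrK addrC.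
have Cpn : Cp S p (- p).
  split; first by rewrite star_opp hp.
  move=> eps eps0.
  pose t : R := (1 - r)^-1.
  have t0 : 0 < t by rewrite /t invr_gt0 subr_gt0.
  have tr : t * r = t - 1 by rewrite /t; field; rewrite subr_eq0 gt_eqF.
  exists t%:C; split; first by rewrite ltcR.
  have h1' : 0 <= t%:C by rewrite ler0c ltW.
  have := pos_add _ _ (pos_add _ _ (pos_scale _ _ h1' prp) pep) (pos_scale _ _ (ltW eps0) pp).
  congr (pos S _).
  have -> : t%:C *: (r%:C *: e - p) + (e - p) = t%:C *: (e - p) - p.
    rewrite !scalerBr scalerA -rmorphM tr rmorphB rmorph1 scalerBl scale1r.
    by rewrite (addrAC (t%:C *: e)) addrA subrK.
  by rewrite [RHS]addrAC (addrC (- p)).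
exists 1, (fun _ => 1), (fun _ => p); split.
  by move=> i; split => //=; rewrite opprK.
by rewrite big_ord1 scale1r.
Qed.


Lemma realC_ge0 (z : C) : 0 <= z -> z = (complex.Re z)%:C /\ 0 <= complex.Re z.
Proof.
move=> hz; have zr : z = (complex.Re z)%:C by rewrite RRe_real // ger0_real.
by split => //; rewrite -ler0c -zr.
Qed.

Lemma alpha_one_notJ p : pos S p -> pos S (e - p) -> alpha_m S p = 1 -> ~ Jp S p p.
Proof.
move=> pp pep ha [n [a [v [hv hp]]]].
set E := [set complex.Re `|phi p| | phi in state S].
have ha' : sup E = 1 := ha.
have hs : has_sup E.
  case: (pselect (has_sup E)) => // nh; move: ha'; rewrite sup_out //.
  by move=> /eqP; rewrite eq_sym oner_eq0.
have sE : forall phi, state S phi -> phi p = (complex.Re (phi p))%:C /\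
    complex.Re `|phi p| = complex.Re (phi p) /\ 0 <= complex.Re (phi p) <= 1.
  move=> phi sphi; have [h0 h1] := state_p _ _ sphi pp pep.
  have [ps s0] := realC_ge0 _ h0.
  split => //; split; first by rewrite ger0_norm.
  by rewrite s0 /= -lecR -ps h1.
pose na i := complex.Re `|a i|.
have naE : forall i, `|a i| = (na i)%:C /\ 0 <= na i.
  by move=> i; apply: realC_ge0.
pose A := \sum_i na i.
have A0 : 0 <= A by apply: sumr_ge0 => i _; case: (naE i).
pose eps : R := (4 * (A + 1))^-1.
have eps0 : 0 < eps by rewrite /eps invr_gt0 mulr_gt0 // ltr_wpDl.
have epsE : eps * (4 * (A + 1)) = 1 by rewrite /eps mulVf // gt_eqF // mulr_gt0 // ltr_wpDl.
have eps0C : 0 < eps%:C by rewrite ltcR.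
have ht : forall i, exists tt : R * R, 0 < tt.1 /\ 0 < tt.2 /\
    pos S (v i + eps%:C *: p + tt.1%:C *: (e - p)) /\
    pos S (- v i + eps%:C *: p + tt.2%:C *: (e - p)).
  move=> i; have [[_ h1] [_ h2]] := hv i.
  have [t1 [t10 ht1]] := h1 _ eps0C.
  have [t2 [t20 ht2]] := h2 _ eps0C.
  have [t1E _] := realC_ge0 _ (ltW t10).
  have [t2E _] := realC_ge0 _ (ltW t20).
  exists (complex.Re t1, complex.Re t2) => /=.
  by rewrite -t1E -t2E -!ltcR -t1E -t2E.
case: (choice ht) => tt htt.
pose T := \sum_i na i * ((tt i).1 + (tt i).2).
have T0 : 0 <= T.
  apply: sumr_ge0 => i _; apply: mulr_ge0; first by case: (naE i).
  by have [? [? _]] := htt i; apply: addr_ge0; apply: ltW.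
pose dl : R := (4 * (T + 1))^-1.
have dl0 : 0 < dl by rewrite /dl invr_gt0 mulr_gt0 // ltr_wpDl.
have dlE : dl * (4 * (T + 1)) = 1 by rewrite /dl mulVf // gt_eqF // mulr_gt0 // ltr_wpDl.
have [z [phi sphi <-] hz] := sup_adherent dl0 hs.
rewrite ha' in hz.
have [ps [nps /andP [s0 s1]]] := sE phi sphi.
rewrite nps in hz.
set s := complex.Re (phi p) in ps s0 s1 hz.
have [p0 pD pZ pN] := state_lin _ sphi.
have [_ [ppos pe]] := sphi.
have bound : forall i, `|phi (v i)| <= (2 * eps * s + ((tt i).1 + (tt i).2) * (1 - s))%:C.
  move=> i; have [t10 [t20 [h1 h2]]] := htt i.
  have q1 := ppos _ h1; have q2 := ppos _ h2.
  rewrite !pD !pZ !pD !pN pe ps in q1 q2.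
  have K0 : forall t : R, 0 < t -> 0 <= (eps * s + t * (1 - s))%:C.
    move=> t t0; rewrite ler0c; apply: addr_ge0; apply: mulr_ge0 => //; first exact: ltW.
      exact: ltW.
    by rewrite subr_ge0.
  have cv : forall t : R, (eps * s + t * (1 - s))%:C = eps%:C * s%:C + t%:C * (1 - s%:C).
    by move=> t; rewrite rmorphD !rmorphM rmorphB rmorph1.
  rewrite -addrA -cv in q1; rewrite -addrA -cv in q2.
  have := norm_bound (phi (v i)) _ _ q1 q2 (K0 _ t10) (K0 _ t20).
  move=> H; apply: le_trans H _.
  rewrite -rmorphD lecR le_eqVlt; apply/orP; left; apply/eqP; ring.
have phiS : phi p = \sum_i a i * phi (v i).
  rewrite hp; apply: (big_ind2 (fun x y => phi x = y)).
  - exact: p0.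
  - by move=> x1 x2 y1 y2 h1 h2; rewrite pD h1 h2.
  - by move=> i _; rewrite pZ.
pose b i := 2 * eps * s + ((tt i).1 + (tt i).2) * (1 - s).
have main : s <= \sum_i na i * b i.
  rewrite -lecR -ps -(ger0_norm (_ : 0 <= phi p)); last by rewrite ps ler0c.
  rewrite phiS rmorph_sum; apply: le_trans (ler_norm_sum _ _ _) _.
  apply: ler_sum => i _; rewrite normrM rmorphM.
  have [nE n0] := naE i.
  by rewrite nE; apply: ler_pM => //; rewrite ?ler0c.
have sumE : \sum_i na i * b i = 2 * eps * s * A + (1 - s) * T.
  rewrite /A /T mulr_sumr mulr_sumr -big_split; apply: eq_bigr => i _.
  rewrite /b /=; ring.
rewrite sumE in main.
have h1 : (1 - s) * T <= dl * T by apply: ler_wpM2r => //; lra.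
have h2 : eps * s * A <= eps * A.
  by apply: ler_wpM2r => //; rewrite -[X in _ <= X]mulr1 ler_wpM2l // ltW.
nra.
Qed.

End Basics.

Lemma ub_states (R : realType) (V : lmodType R[i]) (S : opsys R V) (p : V) :
  pos S p -> pos S (unit_e S - p) ->
  ubound [set complex.Re `|phi p| | phi in state S] 1.
Proof.
move=> pp pep z [psi spsi <-].
have [h0 h1] := state_p _ _ S _ _ spsi pp pep.
by rewrite ger0_norm //; move: h1; rewrite lecE => /andP [_].
Qed.

Theorem proposition4p8 (R : realType) (V : lmodType R[i]) (S : opsys R V)
  (p : V) :
  p != 0 -> pos S p -> pos S (unit_e S - p) ->
  (alpha_m S p = 1 <-> ~ Jp S p p).
Proof.
move=> p0 pp pep.
have e0 : unit_e S != 0.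
  apply/eqP => e0.
  have hh : star S (- p) = - p by rewrite star_opp (pos_herm _ _ S _ pp).
  have [r [_ hr]] := herm_order _ _ S _ hh.
  rewrite e0 scaler0 add0r in hr.
  by move: p0; rewrite (pos_proper _ _ S _ pp hr) eqxx.
split; first exact: alpha_one_notJ.
move=> nJ.
have hr : forall r : R, r < 1 -> ~ pos S (r%:C *: unit_e S - p).
  by move=> r r1 h; apply: nJ; apply: (Jp_of_le _ _ S r).
have [phi [sphi php]] := state_for_p _ _ S p e0 pp pep hr.
rewrite /alpha_m; apply/le_anti/andP; split.
  apply: ge_sup; first by exists (complex.Re `|phi p|), phi.
  exact: ub_states.
apply: ub_le_sup; first by exists 1; apply: ub_states.
by exists phi => //; rewrite php normr1.
Qed.
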